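(* Let $0<r<q-1$, $n\ge2$ and $0\le k,s\le q-1$. If $s_{n-1}^k$ (resp. $t_{n-1}^s$) is $I(1)$-invariant modulo $(\mathrm{Ker}\,T_{-1,0},\mathrm{Ker}\,T_{1,2})$, then $s_n^k$ (resp. $t_n^s$) is also $I(1)$-invariant modulo $(\mathrm{Ker}\,T_{-1,0},\mathrm{Ker}\,T_{1,2})$, i.e. $gs_n^k-s_n^k$ (resp. $gt_n^s-t_n^s$) lies in $\mathrm{Ker}\,T_{-1,0}+\mathrm{Ker}\,T_{1,2}$ for all $g\in I(1)$.
   Context: $F$ is a finite extension of $\mathbb Q_p$ with ring of integers $\mathcal O$, uniformizer $\varpi$, residue field $\mathbb F_q$; $[x]$ is the multiplicative representative of $x\in\mathbb F_q$, $\bar a$ the reduction of $a\in\mathcal O$; convention $0^0=1$. $G=\mathrm{GL}_2(F)$, $K=\mathrm{GL}_2(\mathcal O)$, $Z$ the centre, $I$ the Iwahori subgroup of $K$ (lower-left entry in $\varpi\mathcal O$), $I(1)$ the pro-$p$ Iwahori (elements of $I$ with diagonal entries $\equiv1\bmod\varpi$). $\chi_r:IZ\to\overline{\mathbb F}_p^\times$, $\begin{pmatrix} a&b\\ \varpi c&d\end{pmatrix}\mapsto\bar d^{\,r}$, $\mathrm{diag}(\varpi,\varpi)\mapsto1$; in the compact induction $\mathrm{ind}_{IZ}^G\chi_r$, $[g,1]$ is the element supported on $IZg^{-1}$ with value $1$ at $g^{-1}$, so $h[g,1]=[hg,1]$. $\beta=\begin{pmatrix}0&1\\ \varpi&0\end{pmatrix}$,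 $w=\begin{pmatrix}0&1\\1&0\end{pmatrix}$. $T_{-1,0},T_{1,2}$ are the $G$-endomorphisms with $T_{-1,0}[g,1]=\sum_{\lambda\in I_1}[g\begin{pmatrix}\varpi&\lambda\\0&1\end{pmatrix},1]$, $T_{1,2}[g,1]=\sum_{\lambda\in I_1}[g\beta\begin{pmatrix}1&\lambda\\0&1\end{pmatrix}w,1]$; $(\mathrm{Ker}\,T_{-1,0},\mathrm{Ker}\,T_{1,2})$ denotes $\mathrm{Ker}\,T_{-1,0}+\mathrm{Ker}\,T_{1,2}$. $I_n=\{\sum_{i=0}^{n-1}[\mu_i]\varpi^i:\mu_i\in\mathbb F_q\}$, digits $\mu_i$, truncation $[\mu]_m=\sum_{i<m}[\mu_i]\varpi^i$. $s_n^k=\sum_{\mu\in I_n}\mu_{n-1}^k[\begin{pmatrix}\varpi^n&\mu\\0&1\end{pmatrix},1]$ and $t_n^s=\sum_{\mu\in I_n}\mu_{n-1}^s[\begin{pmatrix}\varpi^{n-1}&[\mu]_{n-1}\\0&1\end{pmatrix}\begin{pmatrix}1&[\mu_{n-1}]\\0&1\end{pmatrix}w,1]$. *)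

(* Defs.v *)
From HB Require Import structures.
From mathcomp Require Import all_boot all_order all_algebra all_field.
From Stdlib Require Import ClassicalEpsilon.
Set Implicit Arguments. Unset Strict Implicit. Unset Printing Implicit Defensive.
Import Order.TTheory GRing.Theory Num.Theory.
Local Open Scope ring_scope.

Notation i0 := (@ord0 1).
Notation i1 := (@ord_max 1).

Definition mx2 (R : Type) (a b c d : R) : 'M[R]_2 :=
  \matrix_(i < 2, j < 2)
    if (i : nat) == 0%N then (if (j : nat) == 0%N then a else b)
    else (if (j : nat) == 0%N then c else d).

Section LocalField.
Variables (F : fieldType) (kF : finFieldType).
(* v : normalized discrete valuation on F^x (its value at 0 is irrelevant) *)
Variables (v : F -> int) (pi : F) (red : F -> kF).

Definition inO (x : F) : bool := (x == 0) || (0 <= v x).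
Definition inPO (x : F) : bool := (x == 0) || (1 <= v x).
Definition unitO (x : F) : bool := (x != 0) && (v x == 0).

Definition vcauchy (u : nat -> F) : Prop :=
  forall N : int, exists n0 : nat, forall m n : nat, (n0 <= m)%N -> (n0 <= n)%N ->
    u m = u n \/ N <= v (u m - u n).
Definition vconverges (u : nat -> F) (l : F) : Prop :=
  forall N : int, exists n0 : nat, forall n : nat, (n0 <= n)%N ->
    u n = l \/ N <= v (u n - l).

(* F is a finite extension of Q_p: a field of characteristic 0, complete for a
   discrete valuation v (normalized, with uniformizer pi), whose residue field
   O / pi O is (via red) the finite field kF of characteristic p. *)
Record p_adic_field (p : nat) : Prop := {
  paf_prime : prime p;
  paf_char0 : forall n : nat, (0 < n)%N -> n%:R != 0 :> F;
  paf_vM : forall x y, x != 0 -> y != 0 -> v (x * y) = v x + v y;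
  paf_vD : forall x y, x != 0 -> y != 0 -> x + y != 0 ->
             Num.min (v x) (v y) <= v (x + y);
  paf_pi_neq0 : pi != 0;
  paf_vpi : v pi = 1;
  paf_complete : forall u, vcauchy u -> exists l, vconverges u l;
  paf_redD : forall x y, inO x -> inO y -> red (x + y) = red x + red y;
  paf_redM : forall x y, inO x -> inO y -> red (x * y) = red x * red y;
  paf_red1 : red 1 = 1;
  paf_red_surj : forall a : kF, exists2 x, inO x & red x = a;
  paf_red_ker : forall x, inO x -> (red x == 0) = inPO x;
  paf_char_res : p \in [pchar kF]
}.

Record teichmuller (teich : kF -> F) : Prop := {
  teich_O : forall x, inO (teich x);
  teich_red : forall x, red (teich x) = x;
  teich_M : forall x y, teich (x * y) = teich x * teich y
}.
End LocalField.

Record alg_closure_Fp (p : nat) (E : closedFieldType) : Prop := {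
  acl_char : p \in [pchar E];
  acl_alg : forall x : E, exists2 n : nat, (0 < n)%N & x ^+ (p ^ n) = x
}.

Section Rep.
Variables (F : fieldType) (kF : finFieldType) (E : closedFieldType).
Variables (v : F -> int) (pi : F) (red : F -> kF) (teich : kF -> F) (iota : kF -> E).

Definition inG (g : 'M[F]_2) : bool := g \in unitmx.
Definition inI (g : 'M[F]_2) : bool :=
  [&& inO v (g i0 i0), inO v (g i0 i1), inPO v (g i1 i0), inO v (g i1 i1)
    & unitO v (\det g)].
Definition inI1 (g : 'M[F]_2) : bool :=
  [&& inI g, red (g i0 i0) == 1 & red (g i1 i1) == 1].
(* IZ, with Z = { a%:M : a in F^x } = pi^Z . O^x *)
Definition inIZ (g : 'M[F]_2) : Prop := exists m : int, inI ((pi ^ m) *: g).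

(* chi_r on IZ: for h = pi^m h' with h' in I, chi_r(h) = (reduction of h'_{22})^r;
   here m = v(h_{22}) *)
Definition chi (r : nat) (h : 'M[F]_2) : E :=
  iota (red (pi ^ (- v (h i1 i1)) * h i1 i1)) ^+ r.

(* [g,1] in ind_{IZ}^G chi_r, as a function on G (zero outside G):
   supported on IZ g^-1, x |-> chi_r(x g) *)
Definition brk (r : nat) (g : 'M[F]_2) : 'M[F]_2 -> E := fun x =>
  if excluded_middle_informative (inG x /\ inIZ (x *m g))
  then chi r (x *m g) else 0.

Definition comb (r : nat) (l : seq (E * 'M[F]_2)) : 'M[F]_2 -> E :=
  fun x => \sum_(cg <- l) cg.1 * brk r cg.2 x.

Definition betaM : 'M[F]_2 := mx2 0 1 pi 0.
Definition wM : 'M[F]_2 := mx2 0 1 1 0.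

(* T_{-1,0} and T_{1,2} applied termwise to sum_i c_i [g_i,1]; I_1 = {[mu] : mu in F_q} *)
Definition Tm10 (l : seq (E * 'M[F]_2)) : seq (E * 'M[F]_2) :=
  flatten [seq [seq (cg.1, cg.2 *m mx2 pi (teich mu) 0 1) | mu : kF] | cg <- l].
Definition T12 (l : seq (E * 'M[F]_2)) : seq (E * 'M[F]_2) :=
  flatten [seq [seq (cg.1, cg.2 *m betaM *m mx2 1 (teich mu) 0 1 *m wM) | mu : kF]
          | cg <- l].

(* f in Ker T, where T is given on the spanning family [g,1] (g in G) *)
Definition inKer (r : nat) (T : seq (E * 'M[F]_2) -> seq (E * 'M[F]_2))
  (f : 'M[F]_2 -> E) : Prop :=
  exists l : seq (E * 'M[F]_2), all (fun cg => inG cg.2) l /\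
    f = comb r l /\ comb r (T l) = (fun _ => 0).

Definition inKerSum (r : nat) (f : 'M[F]_2 -> E) : Prop :=
  exists f1 f2, inKer r Tm10 f1 /\ inKer r T12 f2 /\ f = (fun x => f1 x + f2 x).

(* G acts by right translation: (g f)(x) = f(x g), so g [h,1] = [gh,1] *)
Definition act (g : 'M[F]_2) (f : 'M[F]_2 -> E) : 'M[F]_2 -> E := fun x => f (x *m g).

Definition I1_inv_mod (r : nat) (f : 'M[F]_2 -> E) : Prop :=
  forall g, inI1 g -> inKerSum r (fun x => act g f x - f x).

Definition digval (n : nat) (mu : n.-tuple kF) (m : nat) : F :=
  \sum_(i < m) teich (nth 0 mu i) * pi ^+ i.

Definition s_list (n e : nat) : seq (E * 'M[F]_2) :=
  [seq (iota (nth 0 mu n.-1) ^+ e, mx2 (pi ^+ n) (digval mu n) 0 1) | mu : n.-tuple kF].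
Definition t_list (n e : nat) : seq (E * 'M[F]_2) :=
  [seq (iota (nth 0 mu n.-1) ^+ e,
        mx2 (pi ^+ n.-1) (digval mu n.-1) 0 1 *m mx2 1 (teich (nth 0 mu n.-1)) 0 1 *m wM)
  | mu : n.-tuple kF].

Definition s_vec r n e := comb r (s_list n e).
Definition t_vec r n e := comb r (t_list n e).
End Rep.

(* Main.v *)
Require Import Defs.
From HB Require Import structures.
From mathcomp Require Import all_boot all_order all_algebra all_field.
From mathcomp Require Import zify ring.
From Stdlib Require Import FunctionalExtensionality ClassicalEpsilon.
Set Implicit Arguments. Unset Strict Implicit. Unset Printing Implicit Defensive.
Import Order.TTheory GRing.Theory Num.Theory.
Local Open Scope ring_scope.


Lemma mx2E (R : Type) (a b c d : R) :
  [/\ mx2 a b c d i0 i0 = a, mx2 a b c d i0 i1 = b, mx2 a b c d i1 i0 = c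
    & mx2 a b c d i1 i1 = d].
Proof. by rewrite !mxE. Qed.

Lemma mx2_eta (R : Type) (g : 'M[R]_2) : g = mx2 (g i0 i0) (g i0 i1) (g i1 i0) (g i1 i1).
Proof.
apply/matrixP => i j; rewrite mxE.
by case: i => [[|[|i]] Hi] //; case: j => [[|[|j]] Hj] //=; congr (g _ _); apply/val_inj.
Qed.

Lemma mx2_mul (R : pzRingType) (a b c d a' b' c' d' : R) :
  mx2 a b c d *m mx2 a' b' c' d' =
  mx2 (a * a' + b * c') (a * b' + b * d') (c * a' + d * c') (c * b' + d * d').
Proof.
apply/matrixP => i j; rewrite !mxE !big_ord_recl big_ord0 !mxE /= addr0.
by case: i => [[|[|i]] Hi] //; case: j => [[|[|j]] Hj].
Qed.

Lemma det_mx2 (R : comPzRingType) (a b c d : R) : \det (mx2 a b c d) = a * d - b * c.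
Proof.
rewrite (expand_det_row _ ord0) !big_ord_recl big_ord0 addr0 /cofactor !det_mx11 !mxE /=.
rewrite /bump /=. rewrite !expr0 !mul1r expr1 mulN1r.
by rewrite mulrN.
Qed.


Lemma v1 (F : fieldType) (kF : finFieldType) v pi (red : F -> kF) p
  (HF : p_adic_field v pi red p) : v 1 = 0.
Proof.
have := paf_vM HF (oner_neq0 F) (oner_neq0 F); rewrite mul1r => h.
have : v 1 + v 1 - v 1 = v 1 - v 1 by rewrite -h.
by rewrite addrK subrr.
Qed.

Lemma vN1 (F : fieldType) (kF : finFieldType) v pi (red : F -> kF) p
  (HF : p_adic_field v pi red p) : v (-1) = 0.
Proof.
have hn : (-1 : F) != 0 by rewrite oppr_eq0 oner_neq0.
have := paf_vM HF hn hn; rewrite mulrNN mul1r (v1 HF) => h. lia.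
Qed.

Lemma vN (F : fieldType) (kF : finFieldType) v pi (red : F -> kF) p
  (HF : p_adic_field v pi red p) x : x != 0 -> v (- x) = v x.
Proof.
move=> hx; have hn : (-1 : F) != 0 by rewrite oppr_eq0 oner_neq0.
by rewrite -mulN1r (paf_vM HF hn hx) (vN1 HF) add0r.
Qed.

Lemma inO0 (F : fieldType) v : @inO F v 0.
Proof. by rewrite /inO eqxx. Qed.

Lemma inOD (F : fieldType) (kF : finFieldType) v pi (red : F -> kF) p
  (HF : p_adic_field v pi red p) x y : inO v x -> inO v y -> inO v (x + y).
Proof.
rewrite /inO; case: eqP => [->|/eqP hx] /=; first by rewrite add0r.
case: eqP => [->|/eqP hy] /=; first by rewrite addr0 => ->; rewrite orbT.
move=> h1 h2; case: eqP => [//|/eqP hxy] /=.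
have := paf_vD HF hx hy hxy. 
apply: le_trans; by rewrite le_min h1 h2.
Qed.

Lemma inON (F : fieldType) (kF : finFieldType) v pi (red : F -> kF) p
  (HF : p_adic_field v pi red p) x : inO v x -> inO v (- x).
Proof.
rewrite /inO; case: eqP => [->|/eqP hx] /=; first by rewrite oppr0 eqxx.
by rewrite (vN HF hx) oppr_eq0 (negPf hx).
Qed.

Lemma inOM (F : fieldType) (kF : finFieldType) v pi (red : F -> kF) p
  (HF : p_adic_field v pi red p) x y : inO v x -> inO v y -> inO v (x * y).
Proof.
rewrite /inO; case: eqP => [->|/eqP hx] /=; first by rewrite mul0r eqxx.
case: eqP => [->|/eqP hy] /=; first by rewrite mulr0 eqxx.
by move=> h1 h2; rewrite (paf_vM HF hx hy) addr_ge0 ?orbT.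
Qed.

Lemma inOB (F : fieldType) (kF : finFieldType) v pi (red : F -> kF) p
  (HF : p_adic_field v pi red p) x y : inO v x -> inO v y -> inO v (x - y).
Proof. by move=> h1 h2; apply: (inOD HF) => //; apply: (inON HF). Qed.

Lemma inPO_O (F : fieldType) v (x : F) : inPO v x -> inO v x.
Proof. by rewrite /inPO /inO; case/orP => [->//|h]; rewrite (le_trans _ h) ?orbT. Qed.

Lemma inPOMpi (F : fieldType) (kF : finFieldType) v pi (red : F -> kF) p
  (HF : p_adic_field v pi red p) x : inPO v x -> inPO v (x * pi).
Proof.
rewrite /inPO; case: eqP => [->|/eqP hx] /=; first by rewrite mul0r eqxx.
move=> h; rewrite (paf_vM HF hx (paf_pi_neq0 HF)) (paf_vpi HF).
by rewrite orbC (le_trans h) // lerDl.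
Qed.

Lemma inO_divpi (F : fieldType) (kF : finFieldType) v pi (red : F -> kF) p
  (HF : p_adic_field v pi red p) x : inPO v x -> inO v (x / pi).
Proof.
have hp := paf_pi_neq0 HF.
have hpi : pi^-1 != 0 by rewrite invr_eq0.
have vi : v pi^-1 = -1.
  have := paf_vM HF hp hpi; rewrite divff // (v1 HF) (paf_vpi HF) => h. lia.
rewrite /inPO /inO; case: eqP => [->|/eqP hx] /=; first by rewrite mul0r eqxx.
by move=> h; rewrite (paf_vM HF hx hpi) vi orbC subr_ge0 h.
Qed.

Lemma red0 (F : fieldType) (kF : finFieldType) v pi (red : F -> kF) p
  (HF : p_adic_field v pi red p) : red 0 = 0.
Proof.
have := paf_redD HF (inO0 v) (inO0 v); rewrite addr0 => h.
by have := congr1 (fun z => z - red 0) h; rewrite subrr addrK.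
Qed.

Lemma redN (F : fieldType) (kF : finFieldType) v pi (red : F -> kF) p
  (HF : p_adic_field v pi red p) x : inO v x -> red (- x) = - red x.
Proof.
move=> hx; have := paf_redD HF hx (inON HF hx); rewrite subrr (red0 HF) => h.
by apply/eqP; rewrite -addr_eq0 addrC -h.
Qed.

Lemma redB (F : fieldType) (kF : finFieldType) v pi (red : F -> kF) p
  (HF : p_adic_field v pi red p) x y : inO v x -> inO v y -> red (x - y) = red x - red y.
Proof. by move=> hx hy; rewrite (paf_redD HF hx (inON HF hy)) (redN HF hy). Qed.

Lemma redPO (F : fieldType) (kF : finFieldType) v pi (red : F -> kF) p
  (HF : p_adic_field v pi red p) x : inPO v x -> red x = 0.
Proof. by move=> h; apply/eqP; rewrite (paf_red_ker HF (inPO_O h)). Qed.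


Definition hmat (F : fieldType) (pi : F) (g : 'M[F]_2) (t t' : F) : 'M[F]_2 :=
  mx2 (g i0 i0 - t' * g i1 i0)
      ((g i0 i0 * t + g i0 i1 - t' * (g i1 i0 * t + g i1 i1)) / pi)
      (g i1 i0 * pi) (g i1 i0 * t + g i1 i1).

Lemma coset (F : fieldType) (kF : finFieldType) v pi (red : F -> kF) p teich
  (HF : p_adic_field v pi red p) (Ht : teichmuller v red teich) (g : 'M[F]_2) (a : kF) :
  inI1 v red g ->
  g *m mx2 pi (teich a) 0 1 =
    mx2 pi (teich (a + red (g i0 i1))) 0 1 *m hmat pi g (teich a) (teich (a + red (g i0 i1)))
  /\ inI1 v red (hmat pi g (teich a) (teich (a + red (g i0 i1)))).
Proof.
have hp := paf_pi_neq0 HF.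
rewrite /hmat; set t := teich a; set t' := teich _.
have tO : inO v t by apply: (teich_O Ht).
have t'O : inO v t' by apply: (teich_O Ht).
have rt : red t = a by apply: (teich_red Ht).
have rt' : red t' = a + red (g i0 i1) by apply: (teich_red Ht).
move: rt'; rewrite /inI1 /inI.
move: t' t'O => t' t'O.
set A := g i0 i0; set B := g i0 i1; set C := g i1 i0; set D := g i1 i1.
move=> rt'.
case/and3P => /and5P [AO BO CP DO udet] /eqP rA /eqP rD.
have CO := inPO_O CP.
have rC := redPO HF CP.
set N := A * t + B - t' * (C * t + D).
have h1 : inO v (A * t + B) by apply: (inOD HF) => //; apply: (inOM HF).
have h2 : inO v (C * t + D) by apply: (inOD HF) => //; apply: (inOM HF).
have h3 : inO v (t' * (C * t + D)) by apply: (inOM HF).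
have NO : inO v N by apply: (inOB HF).
have rN : red N = 0.
  rewrite /N (redB HF) // (paf_redD HF) ?(inOM HF) // (paf_redM HF) //.
  rewrite (paf_redM HF) // (paf_redD HF) ?(inOM HF) // (paf_redM HF) //.
  by rewrite rA rt rt' rC rD mul0r add0r mul1r mulr1 subrr.
have NP : inPO v N by rewrite -(paf_red_ker HF NO) rN.
split.
  rewrite [g]mx2_eta -/A -/B -/C -/D !mx2_mul; congr mx2.
  - ring.
  - rewrite [pi * _]mulrC divfK // /N; ring.
  - ring.
  - ring.
apply/and3P; split; last first.
- by rewrite !mxE /= (paf_redD HF) ?(paf_redM HF) ?rC ?rD ?mul0r ?add0r //; apply: (inOM HF).
- by rewrite !mxE /= (redB HF) ?(paf_redM HF) ?rC ?rA ?mulr0 ?subr0 //; apply: (inOM HF).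
rewrite !mxE /=; apply/and5P; split.
- by apply: (inOB HF) => //; apply: (inOM HF).
- exact: (inO_divpi HF NP).
- by rewrite mulrC -[_ * _]mulrC; apply: (inPOMpi HF).
- by apply: (inOD HF) => //; apply: (inOM HF).
- have dg : \det g = A * D - B * C by rewrite [g]mx2_eta det_mx2.
  move: udet; rewrite dg det_mx2.
  suff -> : (A - t' * C) * (C * t + D) - N / pi * (C * pi) = A * D - B * C by [].
  rewrite [C * pi]mulrC mulrA divfK // /N; ring.
Qed.


Definition mapM (F : fieldType) (E : Type) (M : 'M[F]_2) (l : seq (E * 'M[F]_2)) :=
  [seq (cg.1, M *m cg.2) | cg <- l].

Lemma brk_act (F : fieldType) (kF : finFieldType) (E : closedFieldType) v pi
  (red : F -> kF) (iota : kF -> E) r (M h x : 'M[F]_2) :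
  M \in unitmx -> brk v pi red iota r h (x *m M) = brk v pi red iota r (M *m h) x.
Proof.
move=> uM; rewrite /brk mulmxA.
case: excluded_middle_informative => [[H1 H2]|H1];
case: excluded_middle_informative => [[H3 H4]|H3] //.
- by exfalso; apply: H3; split => //; move: H1; rewrite /inG unitmx_mul => /andP[].
- by exfalso; apply: H1; split => //; move: H3; rewrite /inG unitmx_mul uM => ->.
Qed.

Lemma comb_act (F : fieldType) (kF : finFieldType) (E : closedFieldType) v pi
  (red : F -> kF) (iota : kF -> E) r (M : 'M[F]_2) l x :
  M \in unitmx -> act M (comb v pi red iota r l) x = comb v pi red iota r (mapM M l) x.
Proof.
move=> uM; rewrite /act /comb /mapM big_map; apply: eq_bigr => cg _ /=.
by rewrite brk_act.
Qed.

Lemma comb_cat (F : fieldType) (kF : finFieldType) (E : closedFieldType) v pi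
  (red : F -> kF) (iota : kF -> E) r l1 l2 x :
  comb v pi red iota r (l1 ++ l2) x = comb v pi red iota r l1 x + comb v pi red iota r l2 x.
Proof. by rewrite /comb big_cat. Qed.

Lemma Tm10_cat (F : fieldType) (kF : finFieldType) (E : closedFieldType) pi (teich : kF -> F)
  (l1 l2 : seq (E * 'M[F]_2)) : Tm10 pi teich (l1 ++ l2) = Tm10 pi teich l1 ++ Tm10 pi teich l2.
Proof. by rewrite /Tm10 map_cat flatten_cat. Qed.

Lemma T12_cat (F : fieldType) (kF : finFieldType) (E : closedFieldType) pi (teich : kF -> F)
  (l1 l2 : seq (E * 'M[F]_2)) : T12 pi teich (l1 ++ l2) = T12 pi teich l1 ++ T12 pi teich l2.
Proof. by rewrite /T12 map_cat flatten_cat. Qed.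

Lemma Tm10_map (F : fieldType) (kF : finFieldType) (E : closedFieldType) pi (teich : kF -> F)
  M (l : seq (E * 'M[F]_2)) : Tm10 pi teich (mapM M l) = mapM M (Tm10 pi teich l).
Proof.
rewrite /Tm10 /mapM map_flatten -!map_comp; congr flatten; apply: eq_map => cg /=.
by rewrite -map_comp; apply: eq_map => mu /=; rewrite mulmxA.
Qed.

Lemma T12_map (F : fieldType) (kF : finFieldType) (E : closedFieldType) pi (teich : kF -> F)
  M (l : seq (E * 'M[F]_2)) : T12 pi teich (mapM M l) = mapM M (T12 pi teich l).
Proof.
rewrite /T12 /mapM map_flatten -!map_comp; congr flatten; apply: eq_map => cg /=.
by rewrite -map_comp; apply: eq_map => mu /=; rewrite !mulmxA.
Qed.

Lemma inKer_gen (F : fieldType) (kF : finFieldType) (E : closedFieldType) v pi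
  (red : F -> kF) (iota : kF -> E) r (T : seq (E * 'M[F]_2) -> seq (E * 'M[F]_2)) :
  (forall l1 l2, T (l1 ++ l2) = T l1 ++ T l2) ->
  (forall M l, T (mapM M l) = mapM M (T l)) ->
  [/\ inKer v pi red iota r T (fun _ => 0),
      forall f1 f2, inKer v pi red iota r T f1 -> inKer v pi red iota r T f2 ->
        inKer v pi red iota r T (fun x => f1 x + f2 x)
    & forall M f, M \in unitmx -> inKer v pi red iota r T f ->
        inKer v pi red iota r T (act M f)].
Proof.
move=> Tcat Tmap; split.
- exists [::]; split => //; have T0 : T [::] = [::].
    have := Tcat [::] [::]; rewrite cat0s => /(congr1 size); rewrite size_cat => h.
    by apply/eqP; rewrite -size_eq0 -(eqn_add2l (size (T [::]))) addn0 -h.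
  by rewrite T0; split; apply: functional_extensionality => x; rewrite /comb big_nil.
- move=> f1 f2 [l1 [a1 [e1 k1]]] [l2 [a2 [e2 k2]]]; exists (l1 ++ l2); split.
    by rewrite all_cat a1 a2.
  split; apply: functional_extensionality => x; rewrite ?Tcat comb_cat ?e1 ?e2 //.
  by rewrite k1 k2 addr0.
- move=> M f uM [l [a1 [e1 k1]]]; exists (mapM M l); split.
    by rewrite /mapM all_map; apply/allP => cg /(allP a1) /=; rewrite /inG unitmx_mul uM.
  split; apply: functional_extensionality => x; rewrite ?Tmap -comb_act // ?e1 //.
  by rewrite k1.
Qed.

Lemma KerSum_ext (F : fieldType) (kF : finFieldType) (E : closedFieldType) v pi
  (red : F -> kF) teich (iota : kF -> E) r (f g : 'M[F]_2 -> E) :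
  (forall x, f x = g x) -> inKerSum v pi red teich iota r f -> inKerSum v pi red teich iota r g.
Proof. by move=> h; rewrite (functional_extensionality _ _ h). Qed.

Lemma KerSum_props (F : fieldType) (kF : finFieldType) (E : closedFieldType) v pi
  (red : F -> kF) teich (iota : kF -> E) r :
  [/\ inKerSum v pi red teich iota r (fun _ => 0),
      forall f1 f2, inKerSum v pi red teich iota r f1 -> inKerSum v pi red teich iota r f2 ->
        inKerSum v pi red teich iota r (fun x => f1 x + f2 x)
    & forall M f, M \in unitmx -> inKerSum v pi red teich iota r f ->
        inKerSum v pi red teich iota r (act M f)].
Proof.
have [A0 AD AM] := inKer_gen v pi red iota r (@Tm10_cat F kF E pi teich) (@Tm10_map F kF E pi teich).
have [B0 BD BM] := inKer_gen v pi red iota r (@T12_cat F kF E pi teich) (@T12_map F kF E pi teich).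
split.
- exists (fun _ => 0), (fun _ => 0); split => //; split => //.
  by apply: functional_extensionality => x; rewrite addr0.
- move=> f1 f2 [a1 [b1 [ha1 [hb1 e1]]]] [a2 [b2 [ha2 [hb2 e2]]]].
  exists (fun x => a1 x + a2 x), (fun x => b1 x + b2 x); split; first exact: AD.
  split; first exact: BD.
  apply: functional_extensionality => x; rewrite e1 e2 /=.
  by rewrite addrACA.
- move=> M f uM [a1 [b1 [ha1 [hb1 e1]]]].
  exists (act M a1), (act M b1); split; first exact: AM.
  split; first exact: BM.
  by apply: functional_extensionality => x; rewrite /act e1.
Qed.

Lemma KerSum_sum (F : fieldType) (kF : finFieldType) (E : closedFieldType) v pi
  (red : F -> kF) teich (iota : kF -> E) r (I : Type) (s : seq I) (G : I -> 'M[F]_2 -> E) :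
  (forall i, inKerSum v pi red teich iota r (G i)) ->
  inKerSum v pi red teich iota r (fun x => \sum_(i <- s) G i x).
Proof.
have [K0 KD _] := KerSum_props v pi red teich iota r.
move=> hG; elim: s => [|i s IH].
  by apply: KerSum_ext K0 => x; rewrite big_nil.
by apply: KerSum_ext (KD _ _ (hG i) IH) => x; rewrite big_cons.
Qed.


Lemma sum_tuple (kF : finFieldType) (R : zmodType) m (G : m.+1.-tuple kF -> R) :
  \sum_(mu : m.+1.-tuple kF) G mu = \sum_(a : kF) \sum_(t : m.-tuple kF) G (cons_tuple a t).
Proof.
rewrite pair_big /=.
rewrite (reindex (fun p : kF * m.-tuple kF => cons_tuple p.1 p.2)) /=; first by [].
exists (fun mu => (thead mu, behead_tuple mu)) => [[a t] _|mu _] /=.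
  by congr pair; apply: val_inj.
by apply: val_inj; rewrite /= [in RHS](tuple_eta mu).
Qed.

Lemma digval_cons (F : fieldType) (kF : finFieldType) (pi : F) (teich : kF -> F) m a
  (t : m.-tuple kF) j :
  digval pi teich (cons_tuple a t) j.+1 = teich a + pi * digval pi teich t j.
Proof.
rewrite /digval big_ord_recl /= expr0 mulr1; congr (_ + _).
rewrite mulr_sumr; apply: eq_bigr => i _; rewrite /bump /= exprS mulrCA //.
Qed.

Lemma Ma_unit (F : fieldType) (pi t : F) : pi != 0 -> mx2 pi t 0 1 \in unitmx.
Proof. by move=> hp; rewrite unitmxE det_mx2 mulr1 mulr0 subr0 unitfE. Qed.

Lemma comb_tuple (F : fieldType) (kF : finFieldType) (E : closedFieldType) v pi
  (red : F -> kF) (iota : kF -> E) r n (f : n.-tuple kF -> E * 'M[F]_2) x :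
  comb v pi red iota r [seq f mu | mu : n.-tuple kF] x =
  \sum_(mu : n.-tuple kF) (f mu).1 * brk v pi red iota r (f mu).2 x.
Proof. by rewrite /comb big_image. Qed.

Lemma s_decomp (F : fieldType) (kF : finFieldType) (E : closedFieldType) v pi
  (red : F -> kF) teich (iota : kF -> E) r m e x : pi != 0 ->
  s_vec v pi red teich iota r m.+2 e x =
  \sum_(a : kF) s_vec v pi red teich iota r m.+1 e (x *m mx2 pi (teich a) 0 1).
Proof.
move=> hp; rewrite /s_vec /s_list comb_tuple sum_tuple; apply: eq_bigr => a _.
rewrite comb_tuple; apply: eq_bigr => t _; cbn [fst snd].
have -> : (cons_tuple a t)`_m.+2.-1 = t`_m.+1.-1 by [].
rewrite (brk_act _ _ _ _ _ _ _ (Ma_unit (teich a) hp)).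
have -> : mx2 pi (teich a) 0 1 *m mx2 (pi ^+ m.+1) (digval pi teich t m.+1) 0 1
  = mx2 (pi ^+ m.+2) (digval pi teich (cons_tuple a t) m.+2) 0 1.
  rewrite mx2_mul digval_cons.
  by rewrite !(mulr0, addr0, mulr1, mul0r, mul1r, add0r) [pi ^+ m.+2]exprS [teich a + _]addrC.
by [].
Qed.

Lemma t_decomp (F : fieldType) (kF : finFieldType) (E : closedFieldType) v pi
  (red : F -> kF) teich (iota : kF -> E) r m e x : pi != 0 ->
  t_vec v pi red teich iota r m.+2 e x =
  \sum_(a : kF) t_vec v pi red teich iota r m.+1 e (x *m mx2 pi (teich a) 0 1).
Proof.
move=> hp; rewrite /t_vec /t_list comb_tuple sum_tuple; apply: eq_bigr => a _.
rewrite comb_tuple; apply: eq_bigr => t _; cbn [fst snd].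
have -> : (cons_tuple a t)`_m.+2.-1 = t`_m.+1.-1 by [].
rewrite (brk_act _ _ _ _ _ _ _ (Ma_unit (teich a) hp)) !mulmxA.
have -> : mx2 pi (teich a) 0 1 *m mx2 (pi ^+ m.+1.-1) (digval pi teich t m.+1.-1) 0 1
  = mx2 (pi ^+ m.+2.-1) (digval pi teich (cons_tuple a t) m.+2.-1) 0 1.
  rewrite /= mx2_mul digval_cons.
  by rewrite !(mulr0, addr0, mulr1, mul0r, mul1r, add0r) [pi ^+ m.+1]exprS [teich a + _]addrC.
by [].
Qed.


Lemma main_step (F : fieldType) (kF : finFieldType) (E : closedFieldType) v pi
  (red : F -> kF) p teich (iota : kF -> E) r
  (HF : p_adic_field v pi red p) (Ht : teichmuller v red teich) (fs fb : 'M[F]_2 -> E) :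
  (forall x, fb x = \sum_(a : kF) fs (x *m mx2 pi (teich a) 0 1)) ->
  I1_inv_mod v pi red teich iota r fs -> I1_inv_mod v pi red teich iota r fb.
Proof.
move=> hdec hinv g hg.
have hp := paf_pi_neq0 HF.
have [_ _ KM] := KerSum_props v pi red teich iota r.
set c := red (g i0 i1).
pose h a := hmat pi g (teich a) (teich (a + c)).
apply: (@KerSum_ext _ _ _ _ _ _ _ _ _
  (fun x => \sum_(a : kF) act (mx2 pi (teich (a + c)) 0 1)
                (fun y => act (h a) fs y - fs y) x)).
  move=> x; rewrite /act !hdec [X in _ - X](reindex_inj (addIr c)) -sumrB /=.
  apply: eq_bigr => a _.
  have [e _] := coset HF Ht a hg.
  by rewrite -[x *m g *m _]mulmxA e mulmxA.
apply: (@KerSum_sum F kF E v pi red teich iota r kF) => a.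
apply: (KerSum_ext (f := act (mx2 pi (teich (a + c)) 0 1) (fun y => act (h a) fs y - fs y))) => //.
apply: KM; first exact: Ma_unit.
apply: hinv; have [_ hh] := coset HF Ht a hg; exact: hh.
Qed.

Theorem lemma4p1 (p : nat) (F : fieldType) (kF : finFieldType) (E : closedFieldType)
  (v : F -> int) (pi : F) (red : F -> kF) (teich : kF -> F) (iota : {rmorphism kF -> E})
  (HF : p_adic_field v pi red p) (Hteich : teichmuller v red teich)
  (HE : alg_closure_Fp p E)
  (r n k s : nat) :
  (0 < r)%N -> (r < #|kF|.-1)%N -> (2 <= n)%N -> (k <= #|kF|.-1)%N -> (s <= #|kF|.-1)%N ->
  (I1_inv_mod v pi red teich iota r (s_vec v pi red teich iota r n.-1 k) ->
   I1_inv_mod v pi red teich iota r (s_vec v pi red teich iota r n k)) /\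
  (I1_inv_mod v pi red teich iota r (t_vec v pi red teich iota r n.-1 s) ->
   I1_inv_mod v pi red teich iota r (t_vec v pi red teich iota r n s)).
Proof.
move=> _ _ hn _ _.
have hp := paf_pi_neq0 HF.
case: n hn => [|[|m]] // _ /=.
split; apply: (main_step HF Hteich) => x.
- exact: s_decomp.
- exact: t_decomp.
Qed.
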